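(* Let $X\subset\mathbb{R}^n$ be a finite set of points and let $G\subset\mathbb{R}[x_1,\ldots,x_n]$ be a set of polynomials with $\mathcal I(X)=\langle G\rangle$. Let $t$ be a positive integer and suppose that every $\widetilde g\in\mathcal I(X)$ of degree at most $t$ satisfies $\widetilde g\in\langle G^t\rangle$. Then for any $g\in\mathcal I(X)$ of degree at most $t+1$, if $(\partial g/\partial x_k)(X)=\boldsymbol 0$ for all $k\in\{1,\ldots,n\}$, then $g\in\langle G^t\rangle$.
   Context: $\mathcal I(X)=\{g\in\mathbb{R}[x_1,\ldots,x_n]:g(\boldsymbol x)=0\ \forall\boldsymbol x\in X\}$; for a polynomial $h$, $h(X)$ is the vector of its values at the points of $X$. $\langle S\rangle$ is the ideal generated by $S$; $G^t$ is the set of elements of $G$ of degree at most $t$. *)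

(* Defs.v *)
From HB Require Import structures.
From mathcomp Require Import all_boot all_order all_algebra.
From mathcomp Require Import reals.
From mathcomp Require Import mpoly.
Set Implicit Arguments. Unset Strict Implicit. Unset Printing Implicit Defensive.
Import Order.TTheory GRing.Theory Num.Theory.
Local Open Scope ring_scope.

Section Defs.
Variables (R : realType) (n : nat).

Definition evalpt (p : {mpoly R[n]}) (x : 'rV[R]_n) : R := p.@[fun i => x ord0 i].

Definition vanishing_ideal (X : seq 'rV[R]_n) (p : {mpoly R[n]}) : Prop :=
  forall x, x \in X -> evalpt p x = 0.

Definition in_ideal (S : {mpoly R[n]} -> Prop) (p : {mpoly R[n]}) : Prop :=
  exists s : seq ({mpoly R[n]} * {mpoly R[n]}),
    (forall hg, hg \in s -> S hg.2) /\
    p = \sum_(hg <- s) hg.1 * hg.2.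

(* total degree at most t (msize p = 1 + total degree, 0 for p = 0) *)
Definition deg_le (p : {mpoly R[n]}) (t : nat) : Prop := (msize p <= t.+1)%N.

Definition trunc_deg (G : {mpoly R[n]} -> Prop) (t : nat) : {mpoly R[n]} -> Prop :=
  fun g => G g /\ deg_le g t.

End Defs.

(* Main.v *)
Require Import Defs.
From HB Require Import structures.
From mathcomp Require Import all_boot all_order all_algebra.
From mathcomp Require Import reals.
From mathcomp Require Import mpoly.
Import Order.TTheory GRing.Theory Num.Theory.
Local Open Scope ring_scope.

Section Aux.
Variables (R : realType) (n : nat).
Implicit Types (p q : {mpoly R[n]}).

Lemma in_ideal0 (S : {mpoly R[n]} -> Prop) : in_ideal S 0.
Proof. by exists [::]; split; [move=> hg; rewrite in_nil | rewrite big_nil]. Qed.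

Lemma in_idealD (S : {mpoly R[n]} -> Prop) p q :
  in_ideal S p -> in_ideal S q -> in_ideal S (p + q).
Proof.
move=> [s [Hs ->]] [s' [Hs' ->]]; exists (s ++ s'); split; last by rewrite big_cat.
by move=> hg; rewrite mem_cat => /orP [/Hs|/Hs'].
Qed.

Lemma in_idealM (S : {mpoly R[n]} -> Prop) h p :
  in_ideal S p -> in_ideal S (h * p).
Proof.
move=> [s [Hs ->]]; exists [seq (h * hg.1, hg.2) | hg <- s]; split.
  by move=> hg /mapP [x xs ->] /=; apply: Hs.
rewrite big_map mulr_sumr; apply: eq_bigr => i _ /=; by rewrite mulrA.
Qed.

Lemma in_idealZ (S : {mpoly R[n]} -> Prop) c p :
  in_ideal S p -> in_ideal S (c *: p).
Proof. by rewrite -mul_mpolyC; apply: in_idealM. Qed.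

Lemma in_ideal_sum (S : {mpoly R[n]} -> Prop) (I : Type) (r : seq I) (F : I -> {mpoly R[n]}) :
  (forall i, in_ideal S (F i)) -> in_ideal S (\sum_(i <- r) F i).
Proof.
move=> H; elim: r => [|a r IH]; first by rewrite big_nil; apply: in_ideal0.
by rewrite big_cons; apply: in_idealD.
Qed.

Lemma msize_sum_le (I : Type) (r : seq I) (F : I -> {mpoly R[n]}) k :
  (forall i, (msize (F i) <= k)%N) -> (msize (\sum_(i <- r) F i) <= k)%N.
Proof.
move=> H; elim: r => [|a r IH]; first by rewrite big_nil msize0.
rewrite big_cons; apply: leq_trans (msizeD_le _ _) _.
by rewrite geq_max H IH.
Qed.

Lemma msize_le_coef p k : (forall m, (k <= mdeg m)%N -> p@_m = 0) -> (msize p <= k)%N.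
Proof.
move=> H; rewrite msizeE; apply/bigmax_leqP_seq => m /[!mcoeff_msupp] nz _.
by rewrite ltnNge; apply/negP => /H; apply/eqP.
Qed.

Lemma euler_term (k : 'I_n) (m : 'X_{1..n}) (c : R) :
  'X_k * (((m k)%:R * c) *: 'X_[m - U_(k)]) = ((m k)%:R * c) *: 'X_[m] :> {mpoly R[n]}.
Proof.
have [->|nz] := eqVneq (m k) 0%N; first by rewrite mul0r !scale0r mulr0.
rewrite -scalerAr -mpolyXD addmC submK //.
apply/mnm_lepP => l; rewrite mnm1E; case: eqP => [<-|_] //=; by rewrite lt0n.
Qed.

Lemma euler p :
  \sum_(k < n) 'X_k * mderiv k p = \sum_(m <- msupp p) ((mdeg m)%:R * p@_m) *: 'X_[m].
Proof.
rewrite /mderiv.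
under eq_bigr => k _ do rewrite mulr_sumr.
rewrite exchange_big /=; apply: eq_bigr => m _.
under eq_bigr => k _ do rewrite euler_term.
by rewrite -scaler_suml -mulr_suml -natr_sum -mdegE.
Qed.

End Aux.

Theorem lemma2 (R : realType) (n : nat) (X : seq 'rV[R]_n)
    (G : {mpoly R[n]} -> Prop) (t : nat) :
  (forall p, vanishing_ideal X p <-> in_ideal G p) ->
  (0 < t)%N ->
  (forall gt, vanishing_ideal X gt -> deg_le gt t -> in_ideal (trunc_deg G t) gt) ->
  forall g : {mpoly R[n]},
    vanishing_ideal X g -> deg_le g t.+1 ->
    (forall k : 'I_n, forall x, x \in X -> evalpt (mderiv k g) x = 0) ->
    in_ideal (trunc_deg G t) g.
Proof.
move=> _ _ Ht g Vg Dg Dk.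
have Hd : forall k : 'I_n, in_ideal (trunc_deg G t) (mderiv k g).
  move=> k; apply: Ht; first by move=> x; apply: Dk.
  rewrite /deg_le; apply: msize_le_coef => m Hm.
  rewrite mcoeff_deriv memN_msupp_eq0 ?mul0rn //; apply: msize_mdeg_ge.
  by rewrite mdegD mdeg1 addn1; apply: leq_trans Dg _.
pose h := (t.+1)%:R *: g - \sum_(k < n) 'X_k * mderiv k g.
have Vh : vanishing_ideal X h.
  move=> x xX; rewrite /evalpt /h mevalB mevalZ.
  rewrite (big_morph _ (mevalD _) (meval0 _)).
  rewrite big1 ?subr0; first by have := Vg x xX; rewrite /evalpt => ->; rewrite mulr0.
  by move=> k _; rewrite mevalM; have := Dk k x xX; rewrite /evalpt => ->; rewrite mulr0.
have Dh : deg_le h t.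
  rewrite /deg_le /h euler {1}(mpolyE g) scaler_sumr -sumrB.
  apply: msize_sum_le => m.
  rewrite scalerA -scalerBl -mulrBl.
  have [Hm|Hm] := leqP (mdeg m) t.
    apply: leq_trans (msizeZ_le _ _) _; by rewrite msizeX.
  have [Hs|Hs] := boolP (m \in msupp g).
    have := msize_mdeg_lt Hs => Hlt.
    have -> : mdeg m = t.+1 by apply/eqP; rewrite eqn_leq Hm andbT -ltnS; apply: leq_trans Hlt Dg.
    by rewrite subrr mul0r scale0r msize0.
  by rewrite memN_msupp_eq0 // mulr0 scale0r msize0.
have -> : g = (t.+1)%:R^-1 *: (h + \sum_(k < n) 'X_k * mderiv k g).
  rewrite /h subrK scalerA mulVf ?scale1r //.
  by rewrite pnatr_eq0.
apply: in_idealZ; apply: in_idealD; first by apply: Ht.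
by apply: in_ideal_sum => k; apply: in_idealM.
Qed.
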